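(* Let $X$ be a topological space, $Y$ an Alexandroff space, $f:X\to Y$ a continuous surjection, and $\mathcal{S}=(\mathcal{O}(Y),\nabla_Y)$ a spacetime. Then there exists $\nabla_X:\mathcal{O}(X)\to\mathcal{O}(X)$ such that $\mathcal{T}=(\mathcal{O}(X),\nabla_X)$ is a spacetime and $f^{-1}:\mathcal{S}\to\mathcal{T}$ is a logical geometric map.
   Context: $\mathcal{O}(Z)$ denotes the locale of open subsets of a space $Z$ ordered by inclusion. A space is Alexandroff if arbitrary intersections of open sets are open. A spacetime is a pair $(\mathscr{X},\nabla)$ where $\mathscr{X}$ is a locale (complete lattice in which binary meet distributes over arbitrary joins; its monoidal structure is binary meet with unit the top) and $\nabla:\mathscr{X}\to\mathscr{X}$ preserves arbitrary joins. Its implication is $a\to b=\Box(a\Rightarrow b)$, where $\Box$ is the right adjoint of $\nabla$ and $\Rightarrow$ the Heyting implication; equivalently $a\wedge\nabla b\le c$ iff $b\le a\to c$. A geometric map $g:(\mathscr{X},\nabla_1)\to(\mathscr{Y},\nabla_2)$ between spacetimes is a map preserving arbitrary joins and finite meets with $g\nabla_1=\nabla_2 g$; it is logical if moreover it preserves the implication. *)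

(* Defs.v *)
From HB Require Import structures.
From mathcomp Require Import all_boot all_order.
From mathcomp Require Import boolp classical_sets topology.
Set Implicit Arguments. Unset Strict Implicit. Unset Printing Implicit Defensive.
Local Open Scope classical_set_scope.

(* The locale O(Z) of open subsets of a space Z is represented by the open
   elements of [set Z]; maps between locales O(Z) -> O(W) are functions
   [set Z -> set W] whose properties are only required on open arguments. *)

Definition alexandroff (Y : topologicalType) : Prop :=
  forall S : set (set Y), (forall A, S A -> open A) -> open (\bigcap_(A in S) A).

Definition preserves_joins (Z W : topologicalType) (g : set Z -> set W) : Prop :=
  (forall A, open A -> open (g A)) /\
  (forall S : set (set Z), (forall A, S A -> open A) ->
     g (\bigcup_(A in S) A) = \bigcup_(A in S) g A).

Definition spacetime (Z : topologicalType) (nabla : set Z -> set Z) : Prop :=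
  preserves_joins nabla.

Definition heyting_impl (Z : topologicalType) (a b : set Z) : set Z :=
  \bigcup_(u in [set u : set Z | open u /\ a `&` u `<=` b]) u.

Definition box (Z : topologicalType) (nabla : set Z -> set Z) (c : set Z) : set Z :=
  \bigcup_(u in [set u : set Z | open u /\ nabla u `<=` c]) u.

Definition st_impl (Z : topologicalType) (nabla : set Z -> set Z) (a b : set Z) : set Z :=
  box nabla (heyting_impl a b).

Definition geometric_map (Z W : topologicalType) (n1 : set Z -> set Z)
  (n2 : set W -> set W) (g : set Z -> set W) : Prop :=
  [/\ preserves_joins g,
      (forall a b, open a -> open b -> g (a `&` b) = g a `&` g b),
      g setT = setT &
      (forall a, open a -> g (n1 a) = n2 (g a))].

Definition logical_geometric_map (Z W : topologicalType) (n1 : set Z -> set Z)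
  (n2 : set W -> set W) (g : set Z -> set W) : Prop :=
  geometric_map n1 n2 g /\
  (forall a b, open a -> open b -> g (st_impl n1 a b) = st_impl n2 (g a) (g b)).

(* Main.v *)
Require Import Defs.
From mathcomp Require Import all_boot all_order.
From mathcomp Require Import boolp classical_sets topology.
Local Open Scope classical_set_scope.

Lemma sub_eq_open (Z : topologicalType) (A B : set Z) :
  open A -> open B -> (forall u, open u -> (u `<=` A <-> u `<=` B)) -> A = B.
Proof.
move=> oA oB H; rewrite eqEsubset; split.
- by apply/(H A oA).
- by apply/(H B oB).
Qed.

Lemma pj_mono (Z : topologicalType) (n : set Z -> set Z) :
  preserves_joins n -> forall u v, open u -> open v -> u `<=` v -> n u `<=` n v.
Proof.
move=> [_ J] u v ou ov uv.
have E : v = \bigcup_(A in [set u; v]) A.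
  rewrite eqEsubset; split => [x vx|x [A [->|->] Ax]]; [by exists v; [right|]|by apply: uv|by []].
have := J [set u; v]; rewrite -E => ->; last by move=> A [->|->].
by move=> x nux; exists u; [left|].
Qed.

Lemma box_open (Z : topologicalType) (n : set Z -> set Z) c : open (box n c).
Proof. by apply: bigcup_open => u []. Qed.

Lemma box_adj (Z : topologicalType) (n : set Z -> set Z) c :
  preserves_joins n -> forall u, open u -> (u `<=` box n c <-> n u `<=` c).
Proof.
move=> pn u ou; split => [ub|nuc]; last by move=> x ux; exists u.
move=> x nux; have := @pj_mono _ _ pn _ _ ou (@box_open _ n c) ub x nux.
case: pn => _ J; rewrite /box J; last by move=> A [].
by move=> [v [_ nvc] nvx]; apply: nvc.
Qed.

Lemma heyting_open (Z : topologicalType) (a b : set Z) : open (heyting_impl a b).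
Proof. by apply: bigcup_open => u []. Qed.

Lemma heyting_adj (Z : topologicalType) (a b u : set Z) :
  open u -> (u `<=` heyting_impl a b <-> a `&` u `<=` b).
Proof.
move=> ou; split => [uh|H]; last by move=> x ux; exists u.
move=> x [ax ux]; have [v [_ Hv] vx] := uh x ux; by apply: Hv.
Qed.

Theorem corollary5p14 (X Y : topologicalType) (f : X -> Y)
  (nablaY : set Y -> set Y) :
  alexandroff Y -> continuous f -> (forall y : Y, exists x : X, f x = y) ->
  spacetime nablaY ->
  exists nablaX : set X -> set X,
    spacetime nablaX /\
    logical_geometric_map nablaY nablaX (fun A : set Y => f @^-1` A).
Proof.
move=> alex fc fs sY.
have pre_open : forall A, open A -> open (f @^-1` A).
  by move=> A oA; apply: open_comp => // x _; apply: fc.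
pose fl (U : set X) := \bigcap_(V in [set V : set Y | open V /\ f @` U `<=` V]) V.
have fl_open : forall U, open (fl U) by move=> U; apply: alex => A [].
have fl_adj : forall U V, open V -> (fl U `<=` V <-> U `<=` f @^-1` V).
  move=> U V oV; split => [H x Ux|H].
  - have : fl U (f x) by move=> W [_ HW]; apply: HW; exists x.
    by move/H.
  - by move=> y fy; apply: fy; split => // _ [x Ux <-]; apply: H.
have fl_mono : forall U U', U `<=` U' -> fl U `<=` fl U'.
  move=> U U' UU y fy W [oW HW]; apply: fy; split => // z [x Ux <-].
  by apply: HW; exists x => //; apply: UU.
have refl : forall A B, f @^-1` A `<=` f @^-1` B -> A `<=` B.
  move=> A B H y Ay; have [x fx] := fs y; move: (H x); rewrite /preimage /= fx; by apply.
have fl_pre : forall a, open a -> fl (f @^-1` a) = a.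
  move=> a oa; rewrite eqEsubset; split; first by apply/fl_adj.
  move=> y ay W [_ HW]; apply: HW; have [x fx] := fs y; exists x => //.
  by rewrite /preimage /= fx.
have [nYo nYJ] := sY.
pose nX (U : set X) := f @^-1` nablaY (fl U).
have sX : spacetime nX.
  split => [A _|S _]; first by apply/pre_open/nYo.
  have E : fl (\bigcup_(A in S) A) = \bigcup_(B in fl @` S) B.
    rewrite eqEsubset; split.
    - apply/fl_adj; first by apply: bigcup_open => B [A _ <-].
      move=> x [A SA Ax]; exists (fl A); first by exists A.
      exact: (proj1 (fl_adj A (fl A) (fl_open A)) (@subset_refl _ _) x Ax).
    - move=> y [B [A SA <-] yB]; apply: (fl_mono A) => // x Ax; by exists A.
  rewrite /nX E nYJ; last by move=> B [A _ <-].
  rewrite preimage_bigcup eqEsubset; split.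
  + by move=> x [B [A SA <-] H]; exists A.
  + by move=> x [A SA H]; exists (fl A) => //; exists A.
have nXo : forall U, open (nX U) by move=> U; apply/pre_open/nYo.
exists nX; split => //; split.
  split.
  - split; first by [].
    by move=> S _; rewrite preimage_bigcup.
  - by move=> a b _ _; rewrite preimage_setI.
  - by rewrite preimage_setT.
  - by move=> a oa; rewrite /nX fl_pre.
move=> a b oa ob.
have oc : open (st_impl nablaY a b) by apply: box_open.
apply: sub_eq_open; [by apply: pre_open|by apply: box_open|].
move=> u ou.
rewrite (@box_adj _ _ _ sX) // heyting_adj // -preimage_setI.
have -> : (f @^-1` (a `&` nablaY (fl u)) `<=` f @^-1` b) <-> (a `&` nablaY (fl u) `<=` b).
  by split => [/refl //|H x [ax nx]]; apply: H.
rewrite -heyting_adj; last by apply: nYo.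
rewrite -(@box_adj _ _ _ sY) //.
by rewrite fl_adj.
Qed.
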